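(* Let $\mathcal E$ be an exchangeability system for a noncommutative probability space $(\mathcal A,\phi)$, let $X_1,\dots,X_n\in\mathcal A$ and $\pi\in\Pi_n$. For each block $B=\{k_1<k_2<\dots<k_b\}$ of $\pi$ choose a primitive root of unity $\omega_b$ of order $b=|B|$ and set, for $i\in B$, $$X_i^{\pi,\omega}=\omega_bX_i^{(k_1)}+\omega_b^2X_i^{(k_2)}+\dots+\omega_b^{b}X_i^{(k_b)}.$$ Then $$K_\pi(X_1,\dots,X_n)=\frac{1}{\prod_{B\in\pi}|B|}\,\tilde\phi(X_1^{\pi,\omega}X_2^{\pi,\omega}\cdots X_n^{\pi,\omega}).$$
   Context: A noncommutative probability space is a pair $(\mathcal A,\phi)$ of a complex unital algebra $\mathcal A$ and a unital linear functional $\phi$. An exchangeability system $\mathcal E$ for $(\mathcal A,\phi)$ consists of a noncommutative probability space $(\mathcal U,\tilde\phi)$ and a family $(\iota_k)_{k\in\mathbb N}$ of embeddings (injective unital algebra homomorphisms) $\iota_k:\mathcal A\to\mathcal A_k\subseteq\mathcal U$ with $\tilde\phi\circ\iota_k=\phi$; write $X^{(k)}=\iota_k(X)$. It is required that for all $X_1,\dots,X_n\in\mathcal A$, all indices $i_1,\dots,i_n\in\mathbb N$ and every bijection $\sigma$ of $\mathbb N$, $\tilde\phi(X_1^{(i_1)}\cdots X_n^{(i_n)})=\tilde\phi(X_1^{(\sigma(i_1))}\cdots X_n^{(\sigma(i_n))})$; so this value depends only on the kernel of $j\mapsto i_j$ (partition of $[n]$ into level sets), and for a partition $\sigma$ of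 $[n]$ it is denoted $\phi_\sigma(X_1,\dots,X_n)$. $\Pi_n$ is the lattice of set partitions of $[n]$ ordered by refinement, with Möbius function $\mu$. The partitioned cumulant is $K_\pi(X_1,\dots,X_n)=\sum_{\sigma\in\Pi_n,\ \sigma\le\pi}\phi_\sigma(X_1,\dots,X_n)\,\mu(\sigma,\pi)$. *)

(* Defs.v *)
From HB Require Import structures.
From mathcomp Require Import all_boot all_order all_algebra.
From mathcomp Require Import reals.
From mathcomp.real_closed Require Import complex.

Set Implicit Arguments.
Unset Strict Implicit.
Unset Printing Implicit Defensive.

Import Order.TTheory GRing.Theory Num.Theory.
Local Open Scope ring_scope.

Definition setpart (n : nat) := {P : {set {set 'I_n}} | partition P [set: 'I_n]}.

Definition refines n (s p : setpart n) : bool :=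
  [forall B in val s, exists C in val p, B \subset C].

(* The fuel argument bounds the recursion depth;
   fuel #|T| is always sufficient since strict chains have length < #|T|. *)
Fixpoint mobius_fuel (R : pzRingType) (T : finType) (le : rel T) (k : nat)
    (x y : T) : R :=
  if ~~ le x y then 0 else
  if x == y then 1 else
  match k with
  | 0 => 0
  | k'.+1 => - \sum_(z : T | le x z && le z y && (z != y)) mobius_fuel R le k' x z
  end.

Definition mobius (R : pzRingType) (T : finType) (le : rel T) (x y : T) : R :=
  mobius_fuel R le #|T| x y.

Definition exchangeability_system (C : comNzRingType) (A U : algType C)
    (phi : A -> C) (phit : U -> C) (iota : nat -> A -> U) : Prop :=
  [/\
      (forall (a : C) (x y : U), phit (a *: x + y) = a * phit x + phit y)
        /\ phit 1 = 1,
      (forall k, [/\ linear (iota k), monoid_morphism (iota k) & injective (iota k)]),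
      (forall k X, phit (iota k X) = phi X) &
      (forall (m : nat) (X : 'I_m -> A) (i : 'I_m -> nat) (s : nat -> nat),
         bijective s ->
         phit (\prod_(j < m) iota (i j) (X j)) =
         phit (\prod_(j < m) iota (s (i j)) (X j)))].

(* phi_sigma(X_1,...,X_n): evaluate with copy indices whose kernel is sigma;
   here block number (position of the block in enum sigma) is used. *)

Definition phi_sigma (C : comNzRingType) (A U : algType C) (phit : U -> C)
    (iota : nat -> A -> U) n (s : setpart n) (X : 'I_n -> A) : C :=
  phit (\prod_(j < n) iota (index (pblock (val s) j) (enum (val s))) (X j)).

Definition cumulant (C : comNzRingType) (A U : algType C) (phit : U -> C)
    (iota : nat -> A -> U) n (p : setpart n) (X : 'I_n -> A) : C :=
  \sum_(s : setpart n | refines s p)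
     phi_sigma phit iota s X * mobius C (@refines n) s p.

Definition Xpiomega (C : comNzRingType) (A U : algType C)
    (iota : nat -> A -> U) n (p : setpart n) (omega : nat -> C)
    (X : 'I_n -> A) (i : 'I_n) : U :=
  let B := pblock (val p) i in
  \sum_(m < #|B|) (omega #|B|) ^+ m.+1 *: iota (nth 0%N [seq val k | k <- enum B] m) (X i).

(* Main.v *)
Require Import Defs.
From HB Require Import structures.
From mathcomp Require Import all_boot all_order all_algebra all_fingroup.
From mathcomp Require Import reals.
From mathcomp.real_closed Require Import complex.
Import Order.TTheory GRing.Theory Num.Theory.
Local Open Scope ring_scope.
Set Implicit Arguments.
Unset Strict Implicit.
Unset Printing Implicit Defensive.

Section Mobius.
Variables (R : pzRingType) (T : finType) (le : rel T).
Hypotheses (le_refl : reflexive le) (le_trans : transitive le)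
  (le_anti : forall x y, le x y -> le y x -> x = y).

Let dd x y := #|[set w | le x w && le w y && (w != y)]|.

Lemma dd_lt x y z : le x z -> le z y -> z != y -> (dd x z < dd x y)%N.
Proof.
move=> xz zy zny; apply: proper_card; apply/properP; split.
  apply/subsetP => w; rewrite !inE => /andP[/andP[xw wz] wnz].
  rewrite xw (le_trans wz zy) /=; apply/eqP => ewy; subst w.
  by move/eqP: wnz; apply; apply: le_anti.
by exists z; rewrite !inE ?xz ?zy ?zny ?eqxx ?andbF.
Qed.

Lemma fuel_stable k : forall x y, (dd x y <= k)%N -> forall m, (k <= m)%N ->
  mobius_fuel R le m x y = mobius_fuel R le k x y.
Proof.
elim: k => [|k IH] x y hd [|m] hm //=.
- case hxy: (le x y) => //=; case: eqP => // /eqP nxy.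
  move: hd; rewrite leqn0 => /eqP /cards0_eq /setP /(_ x).
  by rewrite !inE le_refl hxy nxy.
- case hxy: (le x y) => //=; case: eqP => // /eqP nxy.
  congr (- _); apply: eq_bigr => z /andP[/andP[xz zy] zny].
  apply: IH => //; rewrite -ltnS; exact: leq_trans (dd_lt xz zy zny) hd.
Qed.

Lemma mobius_eq x y : le x y -> x != y ->
  mobius R le x y = - \sum_(z | le x z && le z y && (z != y)) mobius R le x z.
Proof.
move=> xy nxy; rewrite /mobius.
have : (0 < #|T|)%N by apply/card_gt0P; exists x.
case eT: #|T| => [//|k] _ /=; rewrite xy (negbTE nxy) /=.
congr (- _); apply: eq_bigr => z /andP[/andP[xz zy] zny].
symmetry; apply: (@fuel_stable k x z _ k.+1) => //.
rewrite -ltnS -eT; apply: leq_trans (dd_lt xz zy zny) _; exact: max_card.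
Qed.

Lemma mobius0 x y : ~~ le x y -> mobius R le x y = 0.
Proof. by rewrite /mobius; case: #|T| => [|k] /= ->. Qed.

Lemma mobius_sum x y : le x y ->
  \sum_(z | le x z && le z y) mobius R le x z = (x == y)%:R.
Proof.
move=> xy; case: (eqVneq x y) => [<-|nxy].
  rewrite (big_pred1 x); last first.
    by move=> z; apply/andP/eqP => [[a b]|->]; [apply: le_anti | rewrite le_refl].
  by rewrite /mobius; case: #|T| => [|k] /=; rewrite le_refl eqxx.
rewrite (bigD1 y) ?xy ?le_refl //= mobius_eq // addNr.
done.
Qed.
End Mobius.


Section Refines.
Variable n : nat.

Lemma sp_part (s : setpart n) : partition (val s) [set: 'I_n].
Proof. exact: valP s. Qed.

Lemma sp_triv (s : setpart n) : trivIset (val s).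
Proof. by case/and3P: (sp_part s). Qed.

Lemma sp_cover (s : setpart n) (i : 'I_n) : i \in cover (val s).
Proof. by case/and3P: (sp_part s) => /eqP -> _ _; rewrite inE. Qed.

Lemma sp_nonempty (s : setpart n) B : B \in val s -> exists b, b \in B.
Proof.
case/and3P: (sp_part s) => _ _ n0 BP.
case: (set_0Vmem B) => [e|[b bB]]; last by exists b.
by move: n0; rewrite -e BP.
Qed.

Lemma refines_refl : reflexive (@refines n).
Proof. by move=> s; apply/forall_inP => B BP; apply/exists_inP; exists B. Qed.

Lemma refines_trans : transitive (@refines n).
Proof.
move=> p s r /forall_inP sp /forall_inP pr; apply/forall_inP => B /sp.
case/exists_inP => C /pr /exists_inP [D DP CD] BC.
by apply/exists_inP; exists D => //; apply: subset_trans BC CD.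
Qed.

Lemma refines_sub (s p : setpart n) : refines s p -> refines p s ->
  {subset val s <= val p}.
Proof.
move=> /forall_inP sp /forall_inP ps B Bs.
case/exists_inP: (sp B Bs) => C Cp BC.
case/exists_inP: (ps C Cp) => D Ds CD.
have [b bB] := sp_nonempty Bs.
have bD : b \in D by apply: (subsetP CD); apply: (subsetP BC).
have eBD : B = D.
  by rewrite -(def_pblock (sp_triv s) Bs bB) (def_pblock (sp_triv s) Ds bD).
have -> : B = C by apply/eqP; rewrite eqEsubset BC; rewrite eBD.
done.
Qed.

Lemma refines_anti (s p : setpart n) : refines s p -> refines p s -> s = p.
Proof.
move=> sp ps; apply: val_inj; apply/setP => B; apply/idP/idP.
  exact: refines_sub.
exact: refines_sub.
Qed.

End Refines.

Section MomentCumulant.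
Variables (C : comNzRingType) (A U : algType C) (phit : U -> C)
  (iota : nat -> A -> U) (n : nat) (X : 'I_n -> A).

Lemma moment_cumulant (s : setpart n) :
  phi_sigma phit iota s X = \sum_(r | refines r s) cumulant phit iota r X.
Proof.
rewrite /cumulant (exchange_big_dep (fun t => refines t s)) /=; last first.
  by move=> r t rs tr; apply: refines_trans tr rs.
rewrite (eq_bigr (fun t => phi_sigma phit iota t X * (t == s)%:R)); last first.
  move=> t ts; rewrite -big_distrr /=.
  rewrite (eq_bigl (fun r => refines t r && refines r s)); last first.
    by move=> r; rewrite andbC.
  rewrite mobius_sum //; [exact: refines_refl|exact: refines_trans|exact: refines_anti].
rewrite (bigD1 s) ?refines_refl //= big1 ?addr0 ?eqxx ?mulr1 //.
by move=> t /andP[_ /negbTE ->]; rewrite mulr0.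
Qed.
End MomentCumulant.


Lemma perm_extend (T : finType) (A : {set T}) (g : T -> T) :
  {in A &, injective g} -> exists q : {perm T}, {in A, q =1 g}.
Proof.
move=> ginj.
pose ca := enum (~: A); pose cb := enum (~: g @: A).
have sz : size ca = size cb.
  rewrite /ca /cb -!cardE.
  have : (#|A| + #|~: A| = #|g @: A| + #|~: g @: A|)%N by rewrite !cardsC.
  by rewrite card_in_imset // => /addnI.
pose h x := if x \in A then g x else nth x cb (index x ca).
have hout x : x \notin A -> h x \in ~: g @: A.
  move=> xA; rewrite /h (negbTE xA) -mem_enum; apply: mem_nth.
  by rewrite -sz index_mem mem_enum inE.
have hinj : injective h.
  move=> x y; case xA: (x \in A); case yA: (y \in A).
  - by rewrite /h xA yA; apply: ginj.
  - move=> e; have := hout y (negbT yA); rewrite -e /h xA inE.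
    by move/negP; case; apply: imset_f.
  - move=> e; have := hout x (negbT xA); rewrite e /h yA inE.
    by move/negP; case; apply: imset_f.
  - have ix : (index x ca < size cb)%N by rewrite -sz index_mem mem_enum inE xA.
    have iy : (index y ca < size cb)%N by rewrite -sz index_mem mem_enum inE yA.
    rewrite /h xA yA => e.
    have : nth x cb (index x ca) == nth x cb (index y ca).
      by rewrite e (set_nth_default x).
    rewrite nth_uniq ?enum_uniq //.
    move/eqP; apply: (index_inj x); by rewrite mem_enum inE ?xA ?yA.
exists (perm hinj) => x xA; by rewrite permE /h xA.
Qed.

Lemma nat_bij_ext (m : nat) (f1 f2 : 'I_m -> nat) :
  (forall i j, (f1 i == f1 j) = (f2 i == f2 j)) ->
  exists s : nat -> nat, bijective s /\ forall j, s (f1 j) = f2 j.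
Proof.
move=> hk.
pose N := (\sum_(j < m) (f1 j + f2 j)).+1.
have lt1 j : (f1 j < N)%N.
  by rewrite /N ltnS (bigD1 j) //= -addnA leq_addr.
have lt2 j : (f2 j < N)%N.
  by rewrite /N ltnS (bigD1 j) //= (addnC (f1 j)) -addnA leq_addr.
pose A : {set 'I_N} := [set inord (f1 j) | j : 'I_m].
pose pk (x : 'I_N) := [pick j : 'I_m | inord (f1 j) == x].
pose g (x : 'I_N) : 'I_N := if pk x is Some j then inord (f2 j) else x.
have gA j : exists2 j', f1 j' = f1 j & g (inord (f1 j)) = inord (f2 j').
  rewrite /g /pk; case: pickP => [j' /eqP e|/(_ j)]; last by rewrite eqxx.
  exists j' => //; move: e => /(f_equal val) /=. rewrite !inordK ?lt1 //. 
have ginj : {in A &, injective g}.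
  move=> x y /imsetP[j _ ->] /imsetP[k _ ->].
  have [j' e1 ->] := gA j; have [k' e2 ->] := gA k.
  move/(congr1 (@nat_of_ord N)); rewrite !inordK // => /eqP.
  by rewrite -hk e1 e2 => /eqP ->.
have [q hq] := perm_extend ginj.
pose s k := if (k < N)%N then val (q (inord k)) else k.
pose s' k := if (k < N)%N then val (q^-1 (inord k))%g else k.
exists s; split.
  exists s' => k; rewrite /s /s'.
    case: (ltnP k N) => kN.
      rewrite ifT ?ltn_ord // inord_val permK; exact: inordK.
    have kN' : (k < N)%N = false by rewrite ltnNge kN.
    by rewrite !kN'.
  case: (ltnP k N) => kN.
    rewrite ifT ?ltn_ord // inord_val permKV; exact: inordK.
  have kN' : (k < N)%N = false by rewrite ltnNge kN.
  by rewrite !kN'.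
move=> j; rewrite /s lt1 hq; last by apply/imsetP; exists j.
have [j' e1 ->] := gA j; rewrite /= inordK //.
by apply/eqP; rewrite -hk e1.
Qed.

Lemma exch_kernel (C : comNzRingType) (A U : algType C) (phi : A -> C)
  (phit : U -> C) (iota : nat -> A -> U) :
  exchangeability_system phi phit iota ->
  forall m (X : 'I_m -> A) (f1 f2 : 'I_m -> nat),
  (forall i j, (f1 i == f1 j) = (f2 i == f2 j)) ->
  phit (\prod_j iota (f1 j) (X j)) = phit (\prod_j iota (f2 j) (X j)).
Proof.
case=> _ _ _ hex m X f1 f2 hk.
have [s [bs hs]] := nat_bij_ext hk.
rewrite (hex m X f1 s bs); congr (phit _); apply: eq_bigr => j _.
by rewrite hs.
Qed.


Section Factor.
Variables (R : comNzRingType) (T T' : finType) (x0 : T') (P : {set {set T}}).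
Hypothesis hP : partition P [set: T].
Variables (D : T -> {set T'}) (F : T -> T' -> R).

Let triv : trivIset P. Proof. by case/and3P: hP. Qed.
Let cov i : i \in cover P. Proof. by case/and3P: hP => /eqP -> _ _; rewrite inE. Qed.
Let nonempty C : C \in P -> exists c, c \in C.
Proof.
case/and3P: hP => _ _ n0 CP.
case: (set_0Vmem C) => [e|[c cC]]; last by exists c.
by move: n0; rewrite -e CP.
Qed.

Definition adm (f : {ffun T -> T'}) :=
  [forall i, f i \in D i] && [forall i, [forall j, (j \in pblock P i) ==> (f i == f j)]].

Lemma factor :
  \sum_(f | adm f) \prod_i F i (f i) =
  \prod_(C in P) \sum_(x | [forall i in C, x \in D i]) \prod_(i in C) F i x.
Proof.
rewrite (big_distr_big_dep x0) /=.
pose hf (g : {ffun {set T} -> T'}) : {ffun T -> T'} := [ffun i => g (pblock P i)].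
pose hg (f : {ffun T -> T'}) : {ffun {set T} -> T'} :=
  [ffun C : {set T} => if [pick x in C] is Some c then (if C \in P then f c else x0) else x0].
have pickC C : C \in P -> exists2 c, [pick x in C] = Some c & c \in C.
  move=> CP; case: pickP => [c cC|]; first by exists c.
  by have [c cC] := nonempty CP => /(_ c); rewrite cC.
rewrite (reindex_onto hf hg); last first.
  move=> f /andP[_ /forallP cst]; apply/ffunP => i; rewrite !ffunE.
  have [c pc cb] := pickC _ (pblock_mem (cov i)); rewrite pc pblock_mem ?cov //.
  by move: (cst i) => /forallP /(_ c) /implyP /(_ cb) /eqP.
apply: eq_big => g.
  apply/andP/pfamilyP => [[/andP[/forallP hD _] /eqP hgg]|[hsup hin]].
    split.
      apply/subsetP => C; rewrite inE; apply: contraR => CP.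
      by rewrite -hgg ffunE; case: [pick x in C] => [c|]; rewrite ?(negbTE CP).
    move=> C CP; apply/forall_inP => i iC.
    move: (hD i); rewrite ffunE (def_pblock triv CP iC) //.
  split.
    apply/andP; split.
      apply/forallP => i; rewrite ffunE.
      have := hin _ (pblock_mem (cov i)) => /forall_inP; apply.
      by rewrite mem_pblock cov.
    apply/forallP => i; apply/forallP => j; apply/implyP => ji.
    by rewrite !ffunE (same_pblock triv ji).
  apply/eqP/ffunP => C; rewrite !ffunE.
  case CP: (C \in P).
    have [c pc cC] := pickC _ CP; rewrite pc ffunE (def_pblock triv CP cC) //.
  have : g C == x0.
    apply: contraFT CP => gC; apply: (subsetP hsup); by rewrite inE.
  by move/eqP ->; case: [pick x in C].
move=> _.
transitivity (\prod_(C in P) \prod_(i in C) F i (hf g i)); last first.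
  apply: eq_bigr => C CP; apply: eq_bigr => i iC.
  by rewrite ffunE (def_pblock triv CP iC).
rewrite -(big_trivIset _ triv); apply: eq_bigl => i; by rewrite cov.
Qed.
End Factor.


Lemma sum_enum (V : nmodType) n (E : {set 'I_n}) (x0 : 'I_n) (G : 'I_n -> nat -> V) :
  \sum_(x in E) G x (index x (enum E)) = \sum_(m < #|E|) G (nth x0 (enum E) m) m.
Proof.
rewrite -big_enum (big_nth x0) big_mkord cardE; apply: eq_bigr => m _.
by rewrite index_uniq ?enum_uniq.
Qed.

Lemma scale_prod (K : comNzRingType) (A : algType K) (I : Type) (r : seq I)
  (c : I -> K) (u : I -> A) :
  \prod_(i <- r) (c i *: u i) = (\prod_(i <- r) c i) *: \prod_(i <- r) u i.
Proof.
elim: r => [|a r IH]; first by rewrite !big_nil scale1r.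
by rewrite !big_cons IH -scalerAl -scalerAr scalerA.
Qed.

Lemma geo (K : idomainType) (z : K) N : z ^+ N = 1 -> z != 1 ->
  \sum_(m < N) z ^+ m.+1 = 0.
Proof.
move=> zN z1; case: N zN => [|N] zN; first by rewrite big_ord0.
set S := \sum_(m < N.+1) z ^+ m.+1.
have : z * S = S.
  rewrite /S big_distrr /= big_ord_recr /= [in RHS]big_ord_recl /=.
  rewrite -exprS exprSr zN mul1r addrC; congr (_ + _).
move/eqP; rewrite -subr_eq0 -{2}(mul1r S) -mulrBl mulf_eq0 subr_eq0 (negbTE z1).
by move/eqP.
Qed.

Lemma Xpi_expand (C : comNzRingType) (A U : algType C) (iota : nat -> A -> U)
  n (p : setpart n) (omega : nat -> C) (X : 'I_n -> A) (i : 'I_n) :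
  Xpiomega iota p omega X i =
  \sum_(x in pblock (val p) i)
     omega #|pblock (val p) i| ^+ (index x (enum (pblock (val p) i))).+1 *: iota x (X i).
Proof.
rewrite /Xpiomega /= (sum_enum _ i (fun x m => omega #|pblock (val p) i| ^+ m.+1 *: iota x (X i))).
apply: eq_bigr => m _; congr (_ *: iota _ _).
by rewrite (nth_map i) // -cardE.
Qed.

Definition kerp n (f : {ffun 'I_n -> 'I_n}) : setpart n :=
  exist _ (preim_partition f [set: 'I_n]) (preim_partitionP f [set: 'I_n]).

Lemma kerp_pblock n (f : {ffun 'I_n -> 'I_n}) i j :
  (j \in pblock (val (kerp f)) i) = (f i == f j).
Proof.
rewrite /= pblock_equivalence_partition ?inE //.
by split=> // /eqP ->.
Qed.

Lemma ker_refines n (f : {ffun 'I_n -> 'I_n}) (r : setpart n) :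
  refines r (kerp f) = [forall i, [forall j, (j \in pblock (val r) i) ==> (f i == f j)]].
Proof.
apply/forall_inP/forallP => [h i|h C Cr].
  apply/forallP => j; apply/implyP => ji.
  have := h _ (pblock_mem (sp_cover r i)) => /exists_inP [D Dk sub].
  have iD : i \in D by apply: (subsetP sub); rewrite mem_pblock sp_cover.
  have jD : j \in D by apply: (subsetP sub).
  by rewrite -kerp_pblock (def_pblock (sp_triv (kerp f)) Dk iD).
have [c cC] := sp_nonempty Cr.
apply/exists_inP; exists (pblock (val (kerp f)) c).
  exact: pblock_mem (sp_cover _ c).
apply/subsetP => j jC; rewrite kerp_pblock.
move: (h c) => /forallP /(_ j) /implyP; apply.
by rewrite (def_pblock (sp_triv r) Cr cC).
Qed.

Lemma phit_ker (C : comNzRingType) (A U : algType C) (phi : A -> C)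
  (phit : U -> C) (iota : nat -> A -> U) :
  exchangeability_system phi phit iota ->
  forall n (X : 'I_n -> A) (f : {ffun 'I_n -> 'I_n}),
  phit (\prod_j iota (f j) (X j)) = phi_sigma phit iota (kerp f) X.
Proof.
move=> hE n X f; rewrite /phi_sigma; apply: (exch_kernel hE) => i j.
set K := val (kerp f).
rewrite (inj_in_eq (@index_inj _ (pblock K i) (enum K))) ?mem_enum ?pblock_mem ?sp_cover //.
rewrite eq_pblock ?sp_triv ?sp_cover // kerp_pblock.
by [].
Qed.

Lemma inner n (K : idomainType) (p : setpart n) (omega : nat -> K)
  (homega : forall B, B \in val p -> (#|B|).-primitive_root (omega #|B|))
  (C : {set 'I_n}) : (exists c, c \in C) ->
  \sum_(x | [forall i in C, x \in pblock (val p) i])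
     \prod_(i in C) omega #|pblock (val p) i| ^+ (index x (enum (pblock (val p) i))).+1
  = if C \in val p then (#|C|)%:R else 0.
Proof.
move=> [c cC]; set P := val p; set E := pblock P c.
have triv := sp_triv p.
have EP : E \in P := pblock_mem (sp_cover p c).
have key x : [forall i in C, x \in pblock P i] = (C \subset E) && (x \in E).
  apply/forall_inP/andP => [h|[sub xE] i iC].
    split; last exact: h c cC.
    apply/subsetP => i iC.
    have e1 : pblock P x = pblock P i := same_pblock triv (h i iC).
    have e2 : pblock P x = E := same_pblock triv (h c cC).
    by rewrite -e2 e1 mem_pblock sp_cover.
  by rewrite (def_pblock triv EP (subsetP sub i iC)).
rewrite (eq_bigl (fun x => (C \subset E) && (x \in E))); last by move=> x; rewrite key.
case sub: (C \subset E); last first.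
  rewrite big1 => [|x /andP[h]]; last by rewrite h in sub.
  case CP: (C \in P) => //.
  by move: sub; rewrite /E (def_pblock triv CP cC) subxx.
rewrite (eq_bigr (fun x => \prod_(i in C) omega #|E| ^+ (index x (enum E)).+1)); last first.
  move=> x /andP[_ xE]; apply: eq_bigr => i iC.
  by rewrite (def_pblock triv EP (subsetP sub i iC)).
under eq_bigr do rewrite prodr_const.
rewrite (eq_bigl (fun x => x \in E)) //.
rewrite (sum_enum _ c (fun _ m => omega #|E| ^+ m.+1 ^+ #|[pred i in C]|)).
have prE := homega E EP.
case CP: (C \in P).
  have eCE : E = C by rewrite /E (def_pblock triv CP cC).
  under eq_bigr do rewrite exprAC -{1}eCE (prim_expr_order prE) expr1n.
  by rewrite sumr_const card_ord eCE.
have C0 : (0 < #|C|)%N by apply/card_gt0P; exists c.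
have CE : (#|C| < #|E|)%N.
  apply: proper_card; rewrite properEneq sub andbT.
  by apply: contraFN CP => /eqP ->.
under eq_bigr do rewrite exprAC.
apply: geo.
  by rewrite exprAC (prim_expr_order prE) expr1n.
by rewrite -(prim_order_dvd prE) gtnNdvd.
Qed.

Lemma sub_eq n (r p : setpart n) : {subset val r <= val p} -> r = p.
Proof.
move=> sub; apply: val_inj; apply/setP => D; apply/idP/idP => [/sub //|Dp].
have [d dD] := sp_nonempty Dp.
have Cr := pblock_mem (sp_cover r d).
have Cp := sub _ Cr.
have dC : d \in pblock (val r) d by rewrite mem_pblock sp_cover.
by rewrite -(def_pblock (sp_triv p) Dp dD) (def_pblock (sp_triv p) Cp dC).
Qed.

Lemma rsum n (K : idomainType) (p r : setpart n) (omega : nat -> K)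
  (homega : forall B, B \in val p -> (#|B|).-primitive_root (omega #|B|)) :
  \sum_(f | adm (val r) (fun i => pblock (val p) i) f)
     \prod_i omega #|pblock (val p) i| ^+ (index (f i) (enum (pblock (val p) i))).+1
  = if r == p then \prod_(C in val p) (#|C|)%:R else 0.
Proof.
case: (pickP (@predT 'I_n)) => [x0 _|h0]; last first.
  have rp : r = p.
    by apply: sub_eq => C Cr; have [c _] := sp_nonempty Cr; have := h0 c.
  rewrite rp eqxx (big_pred1 [ffun i => i]); last first.
    move=> f; transitivity true; last first.
      by symmetry; apply/eqP/ffunP => i; have := h0 i.
    by apply/andP; split; apply/forallP => i; have := h0 i.
  rewrite big1; last by move=> i; have := h0 i.
  rewrite big1 // => C Cp; have [c _] := sp_nonempty Cp; by have := h0 c.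
rewrite (factor x0 (sp_part r) (fun i => pblock (val p) i) (fun i x => omega #|pblock (val p) i| ^+ (index x (enum (pblock (val p) i))).+1)).
rewrite (eq_bigr (fun C => if C \in val p then (#|C|)%:R else 0)); last first.
  by move=> C Cr; apply: inner => //; exact: sp_nonempty Cr.
case: eqP => [->|ne].
  by apply: eq_bigr => C ->.
case: (boolP [exists C in val r, C \notin val p]) => [/exists_inP[C Cr CnP]|].
  by rewrite (bigD1 C) //= (negbTE CnP) mul0r.
rewrite negb_exists_in => /forall_inP h.
by case: ne; apply: sub_eq => C /h; rewrite negbK.
Qed.


Unset Implicit Arguments.
Set Strict Implicit.

Theorem proposition2p8 (R : realType) (A U : algType R[i])
    (phi : A -> R[i]) (phit : U -> R[i]) (iota : nat -> A -> U)
    (hphi : (forall (a : R[i]) (x y : A), phi (a *: x + y) = a * phi x + phi y)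
            /\ phi 1 = 1)
    (hE : exchangeability_system phi phit iota)
    (n : nat) (X : 'I_n -> A) (p : setpart n) (omega : nat -> R[i])
    (homega : forall B, B \in val p -> (#|B|).-primitive_root (omega #|B|)) :
  cumulant phit iota p X =
  (\prod_(B in val p) (#|B|%:R : R[i]))^-1 *
  phit (\prod_(i < n) Xpiomega iota p omega X i).
Proof.
have [[hlin h1] _ _ _] := hE.
have phit0 : phit 0 = 0.
  have := hlin 1 0 0; rewrite scaler0 addr0 mul1r => e0.
  by apply: (@addrI _ (phit 0)); rewrite addr0 -e0.
have phitD : {morph phit : x y / x + y}.
  by move=> x y; have := hlin 1 x y; rewrite scale1r mul1r.
have phitZ a x : phit (a *: x) = a * phit x.
  by have := hlin a x 0; rewrite !addr0 phit0 addr0.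
set P := val p.
have expand : \prod_(i < n) Xpiomega iota p omega X i =
  \sum_(f in family (fun i => mem (pblock P i)))
    (\prod_i omega #|pblock P i| ^+ (index (f i) (enum (pblock P i))).+1) *:
      \prod_i iota (f i) (X i).
  rewrite (eq_bigr _ (fun i _ => Xpi_expand iota p omega X i)) bigA_distr_big_dep.
  apply: eq_bigr => f _; exact: scale_prod.
rewrite expand (big_morph phit phitD phit0).
rewrite (eq_bigr (fun f : {ffun 'I_n -> 'I_n} => \sum_(r | refines r (kerp f))
   (\prod_i omega #|pblock P i| ^+ (index (f i) (enum (pblock P i))).+1) *
    cumulant phit iota r X)); last first.
  move=> f _; rewrite -big_distrr /= -moment_cumulant -(phit_ker hE); exact: phitZ.
rewrite (exchange_big_dep xpredT) //=.
rewrite (eq_bigr (fun r => (if r == p then \prod_(C in P) (#|C|)%:R else 0) *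
   cumulant phit iota r X)); last first.
  move=> r _; rewrite -(rsum r homega) big_distrl /=; apply: eq_bigl => f.
  rewrite ker_refines /adm; congr (_ && _).
rewrite [X in _ * X](bigD1 p) //= eqxx [X in _ + X]big1 ?addr0; last first.
  by move=> r /= rp; rewrite ifN // mul0r.
have nz : \prod_(C in P) (#|C|%:R : R[i]) != 0.
  apply/prodf_neq0 => C CP; rewrite pnatr_eq0 -lt0n.
  by have [c cC] := sp_nonempty CP; apply/card_gt0P; exists c.
by rewrite mulrA mulVf ?mul1r.
Qed.
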